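(* Let $p\in\{1,\infty\}$, let $f:\mathbb{R}^n\to\mathbb{R}^n$ be a Lipschitz, differentiable vector field, and let $W\in\mathbb{R}^{n\times n}$ be invertible. Then $f$ is WIC with respect to the weighted norm $x\mapsto \|Wx\|_p$ if and only if there exist $\gamma\ge 0$ and a differentiable Lipschitz map $\phi:\mathbb{R}^n\to\mathbb{R}^n$ with $\|\phi\|_{\mathrm{Lip},p}\le\gamma$ such that \[ f(x) = -\gamma x + W^{-1}\phi(Wx)\quad\text{for all } x\in\mathbb{R}^n. \]
   Context: For $x\in\mathbb{R}^n$, $\|x\|_1=\sum_i|x_i|$ and $\|x\|_\infty=\max_i|x_i|$, with induced matrix norms $\|A\|_p=\sup_{x\neq0}\|Ax\|_p/\|x\|_p$. For a norm $\|\cdot\|$ on $\mathbb{R}^n$ with induced matrix norm also denoted $\|\cdot\|$, the matrix measure of $A$ is $\mu(A)=\lim_{h\to0^+}\frac{\|I+hA\|-1}{h}$; for the weighted norm $\|Wx\|_p$ this equals $\mu_p(WAW^{-1})$, where $\mu_1(B)=\max_j\big(b_{jj}+\sum_{i\ne j}|b_{ij}|\big)$ and $\mu_\infty(B)=\max_i\big(b_{ii}+\sum_{j\ne i}|b_{ij}|\big)$. $Df(x)$ is the Jacobian of $f$ at $x$. A vector field $f$ is weakly infinitesimally contracting (WIC) with respect to a norm if $\sup_{x\in\mathbb{R}^n}\mu(Df(x))\le 0$ for the associated matrix measure $\mu$. For differentiable $\phi$, $\|\phi\|_{\mathrm{Lip},p}=\sup_{x}\|D\phi(x)\|_p$. 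*)

(* Defs.v *)
From HB Require Import structures.
From mathcomp Require Import all_boot all_order all_algebra.
From mathcomp Require Import all_classical all_reals all_analysis.
Set Implicit Arguments. Unset Strict Implicit. Unset Printing Implicit Defensive.
Import Order.TTheory GRing.Theory Num.Theory.
Import numFieldNormedType.Exports.
Local Open Scope classical_set_scope.
Local Open Scope ring_scope.

Inductive pexp := P1 | Pinf.

Definition vnorm (R : realType) (n : nat) (p : pexp) (x : 'cV[R]_n) : R :=
  match p with
  | P1 => \sum_(i < n) `|x i 0|
  | Pinf => \big[Num.max/0]_(i < n) `|x i 0|
  end.

Definition ind_norm (R : realType) (n : nat) (p : pexp) (A : 'M[R]_n) : R :=
  sup [set vnorm p (A *m x) / vnorm p x | x in [set x : 'cV[R]_n | x != 0]].

Definition mu (R : realType) (n : nat) (p : pexp) (B : 'M[R]_n) : R :=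
  match p with
  | P1 => sup [set B j j + \sum_(i < n | i != j) `|B i j| | j in [set: 'I_n]]
  | Pinf => sup [set B i i + \sum_(j < n | j != i) `|B i j| | i in [set: 'I_n]]
  end.

Definition jac (R : realType) (n : nat) (f : 'cV[R]_n -> 'cV[R]_n) (x : 'cV[R]_n)
  : 'M[R]_n := \matrix_(i, j) ('d f x (delta_mx j 0 : 'cV[R]_n)) i 0.

(* Lipschitz (w.r.t. the canonical sup-norm on 'cV[R]_n; all norms are equivalent) *)
Definition lipschitz_map (R : realType) (n : nat) (f : 'cV[R]_n -> 'cV[R]_n) : Prop :=
  exists L : R, forall x y, `|f x - f y| <= L * `|x - y|.

(* matrix measure of A w.r.t. the weighted norm x |-> ||W x||_p *)
Definition wmu (R : realType) (n : nat) (p : pexp) (W A : 'M[R]_n) : R :=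
  mu p (W *m A *m invmx W).

Definition WIC (R : realType) (n : nat) (p : pexp) (W : 'M[R]_n)
  (f : 'cV[R]_n -> 'cV[R]_n) : Prop :=
  forall x, wmu p W (jac f x) <= 0.

(* ||phi||_{Lip,p} = sup_x ||D phi(x)||_p ; "<= gamma" unfolds to a bound at every x *)
Definition lip_norm_le (R : realType) (n : nat) (p : pexp)
  (phi : 'cV[R]_n -> 'cV[R]_n) (gamma : R) : Prop :=
  forall x, ind_norm p (jac phi x) <= gamma.

(* Main.v *)
Require Import Defs.
From HB Require Import structures.
From mathcomp Require Import all_boot all_order all_algebra.
From mathcomp Require Import all_classical all_reals all_analysis.
From mathcomp Require Import lra.
Import Order.TTheory GRing.Theory Num.Theory.
Import numFieldNormedType.Exports.
Local Open Scope ring_scope.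

Section Helpers.
Variable R : realType.

Lemma sup_le (E : set R) (K : R) : 0 <= K -> (forall e, E e -> e <= K) -> sup E <= K.
Proof.
move=> K0 HE; have [nE|nE] := pselect (exists e, E e).
  by apply: ge_sup => // e Ee; exact: HE.
have -> : E = set0 by apply/funext => e; apply/propext; split => // Ee; apply: nE; exists e.
by rewrite sup0.
Qed.

Lemma mxnorm_entry m k (x : 'M[R]_(m,k)) i j : `|x i j| <= `|x|.
Proof.
rewrite -[`|x|]/(mx_norm x) mx_normrE.
exact: (le_bigmax _ (fun ij : 'I_m * 'I_k => `|x ij.1 ij.2|) (i, j)).
Qed.

Lemma mxnorm_le m k (x : 'M[R]_(m,k)) c : 0 <= c -> (forall i j, `|x i j| <= c) -> `|x| <= c.
Proof.
move=> c0 H; rewrite -[`|x|]/(mx_norm x) mx_normrE.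
by apply: bigmax_le => // -[i j] _; exact: H.
Qed.

Variable n : nat.
Implicit Types (A B : 'M[R]_n) (x : 'cV[R]_n).

Lemma sum_le_total (F : 'I_n -> 'I_n -> R) i :
  (forall i j, 0 <= F i j) -> \sum_j F i j <= \sum_i' \sum_j F i' j.
Proof.
move=> F0; rewrite [leRHS](bigD1 i) //= lerDl; apply: sumr_ge0 => k _.
exact: sumr_ge0.
Qed.

Lemma mulmx_norm A x : `|A *m x| <= (\sum_i \sum_j `|A i j|) * `|x|.
Proof.
apply: mxnorm_le => [|i j]; first by rewrite mulr_ge0 // sumr_ge0 // => *; rewrite sumr_ge0.
rewrite mxE (le_trans (ler_norm_sum _ _ _)) //.
apply: le_trans (_ : \sum_k `|A i k| * `|x| <= _).
  apply: ler_sum => k _; rewrite normrM ler_wpM2l //; exact: mxnorm_entry.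
rewrite -mulr_suml ler_wpM2r //; apply: (sum_le_total (fun i j => `|A i j|)) => *.
exact: normr_ge0.
Qed.

Lemma vnorm_ge0 p x : 0 <= vnorm p x.
Proof.
case: p => /=; first by apply: sumr_ge0.
by apply: (big_ind (fun y => 0 <= y)) => // a b; rewrite le_max => ->.
Qed.

Lemma vnorm_entry p x i : `|x i 0| <= vnorm p x.
Proof.
case: p => /=.
  by rewrite (bigD1 i) //= lerDl sumr_ge0.
exact: (le_bigmax _ (fun i => `|x i 0|) i).
Qed.

Lemma vnorm_gt0 p x : x != 0 -> 0 < vnorm p x.
Proof.
move=> xn0; rewrite lt_def vnorm_ge0 andbT; apply/eqP => h.
move/eqP: xn0; apply; apply/matrixP => i j; rewrite (ord1 j) mxE.
by apply/normr0_eq0/eqP; rewrite eq_le normr_ge0 andbT -h vnorm_entry.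
Qed.

Definition colrow p B K := match p with
  | P1 => forall j, \sum_i `|B i j| <= K
  | Pinf => forall i, \sum_j `|B i j| <= K end.

Lemma vnorm_mul_le p B x K : 0 <= K -> colrow p B K -> vnorm p (B *m x) <= K * vnorm p x.
Proof.
case: p => /= K0 HB.
  apply: le_trans (_ : \sum_i \sum_j `|B i j| * `|x j 0| <= _).
    apply: ler_sum => i _; rewrite mxE (le_trans (ler_norm_sum _ _ _)) //.
    by apply: ler_sum => j _; rewrite normrM.
  rewrite exchange_big /= mulr_sumr; apply: ler_sum => j _.
  by rewrite -mulr_suml ler_wpM2r.
apply: bigmax_le => [|i _]; first by rewrite mulr_ge0 // (vnorm_ge0 Pinf).
rewrite mxE (le_trans (ler_norm_sum _ _ _)) //.
apply: le_trans (_ : \sum_j `|B i j| * vnorm Pinf x <= _).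
  apply: ler_sum => j _; rewrite normrM ler_wpM2l //; exact: (vnorm_entry Pinf).
by rewrite -mulr_suml ler_wpM2r // (vnorm_ge0 Pinf).
Qed.

Lemma ind_norm_le p B K : 0 <= K -> colrow p B K -> ind_norm p B <= K.
Proof.
move=> K0 HB; apply: sup_le => // e [x /= xn0 <-].
rewrite ler_pdivrMr ?vnorm_gt0 //; exact: vnorm_mul_le.
Qed.

Definition elt p B j := match p with
  | P1 => B j j + \sum_(i < n | i != j) `|B i j|
  | Pinf => B j j + \sum_(k < n | k != j) `|B j k| end.

Lemma muE p B : mu p B = sup [set elt p B j | j in [set: 'I_n]]%classic.
Proof. by case: p. Qed.

Lemma mu_le0 p B : (forall j, elt p B j <= 0) -> mu p B <= 0.
Proof. by move=> H; rewrite muE; apply: sup_le => // e [j _ <-]. Qed.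

Lemma elt_le_mu p B j : elt p B j <= mu p B.
Proof.
rewrite muE; apply: ub_le_sup; last by exists j.
exists (\sum_k `|elt p B k|) => e [k _ <-].
rewrite (le_trans (ler_norm _)) // [leRHS](bigD1 k) //= lerDl.
by apply: sumr_ge0 => *.
Qed.


Lemma colrow_total p B : colrow p B (\sum_i \sum_j `|B i j|).
Proof.
case: p => /= [j|i]; last by apply: (sum_le_total (fun i j => `|B i j|)) => *.
apply: ler_sum => i _; rewrite [leRHS](bigD1 j) //= lerDl; by apply: sumr_ge0 => *.
Qed.

Lemma ind_ub p B : has_ubound [set vnorm p (B *m x) / vnorm p x | x in [set x : 'cV[R]_n | x != 0]]%classic.
Proof.
exists (\sum_i \sum_j `|B i j|) => e [x /= xn0 <-].
rewrite ler_pdivrMr ?vnorm_gt0 //; apply: vnorm_mul_le; last exact: colrow_total.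
by apply: sumr_ge0 => *; apply: sumr_ge0 => *.
Qed.

Lemma elt_le_ind p B j : elt p B j <= ind_norm p B.
Proof.
case: p.
  apply: le_trans (_ : vnorm P1 (B *m delta_mx j 0) / vnorm P1 (delta_mx j 0) <= _).
    have -> : vnorm P1 (delta_mx j 0 : 'cV[R]_n) = 1.
      rewrite /= (bigD1 j) //= big1 => [|i ne]; first by rewrite /delta_mx !mxE !eqxx normr1 addr0.
      by rewrite /delta_mx !mxE (negbTE ne) normr0.
    rewrite divr1 -colE /= [leRHS](bigD1 j) //= !mxE lerD ?ler_norm //.
    by apply: ler_sum => i _; rewrite mxE.
  apply: ub_le_sup; first exact: ind_ub.
  exists (delta_mx j 0) => //=; apply/eqP => /matrixP /(_ j 0); rewrite /delta_mx !mxE !eqxx /=.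
  by move/eqP; rewrite oner_eq0.
set x : 'cV[R]_n := \col_k (if k == j then 1 else Num.sg (B j k)).
have x1 : vnorm Pinf x = 1.
  apply/eqP; rewrite eq_le; apply/andP; split.
    apply: bigmax_le => // k _; rewrite mxE; case: eqP => _; first by rewrite normr1.
    by rewrite normr_sg; case: (_ != 0).
  by apply: le_trans (vnorm_entry Pinf x j); rewrite mxE eqxx normr1.
apply: le_trans (_ : vnorm Pinf (B *m x) / vnorm Pinf x <= _); last first.
  apply: ub_le_sup; first exact: ind_ub.
  exists x => //=; apply/eqP => x0; move: x1; rewrite x0.
  suff -> : vnorm Pinf (0 : 'cV[R]_n) = 0 by move/eqP; rewrite eq_sym oner_eq0.
  by apply/eqP; rewrite eq_le (vnorm_ge0 Pinf) andbT; apply: bigmax_le => // k _; rewrite mxE normr0.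
rewrite x1 divr1; apply: le_trans (vnorm_entry Pinf _ j); rewrite mxE.
rewrite (bigD1 j) //= !mxE eqxx mulr1 (le_trans _ (ler_norm _)) // lerD //.
apply: ler_sum => k /negbTE ne; rewrite !mxE ne mulrC -normrEsg //.
Qed.

Lemma elt_shift p B c j : elt p (B + c%:M) j = elt p B j + c.
Proof.
case: p => /=; rewrite !mxE eqxx mulr1n -addrA [c + _]addrC addrA; congr (_ + _); congr (_ + _);
  apply: eq_bigr => i ne; rewrite !mxE; [rewrite (negbTE ne)|rewrite eq_sym (negbTE ne)];
  by rewrite mulr0n addr0.
Qed.

Lemma colrow_shift p A c : (forall j, elt p A j <= 0) -> (forall j, `|A j j| <= c) ->
  colrow p (A + c%:M) c.
Proof.
move=> He Hd.
have key : forall j, `|(A + c%:M) j j| = A j j + c.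
  move=> j; rewrite !mxE eqxx mulr1n ger0_norm // -lerBlDr sub0r.
  by have := Hd j; rewrite ler_norml => /andP[].
case: p He => /= He j; rewrite (bigD1 j) //= key.
  rewrite (eq_bigr (fun i => `|A i j|)) => [|i ne]; last by rewrite !mxE (negbTE ne) mulr0n addr0.
  by have := He j; lra.
rewrite (eq_bigr (fun i => `|A j i|)) => [|i ne]; last by rewrite !mxE eq_sym (negbTE ne) mulr0n addr0.
by have := He j; lra.
Qed.

End Helpers.

Section Analytic.
Variable R : realType.
Variable n : nat.

Lemma jacE (f : 'cV[R]_n -> 'cV[R]_n) x v : 'd f x v = jac f x *m v.
Proof.
rewrite {1}(matrix_sum_delta v) linear_sum /=.
apply/matrixP => i k; rewrite (ord1 k) !mxE summxE; apply: eq_bigr => j _.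
rewrite big_ord1 linearZ /= !mxE mulrC; congr (_ * _).
Qed.

Lemma mx_ext (A B : 'M[R]_n) : (forall v : 'cV[R]_n, A *m v = B *m v) -> A = B.
Proof.
move=> H; apply/matrixP => i j; have := congr1 (fun M : 'cV[R]_n => M i 0) (H (delta_mx j 0)).
by rewrite -!colE !mxE.
Qed.

Lemma diff_lip (f : 'cV[R]_n -> 'cV[R]_n) L x v :
  (forall x y, `|f x - f y| <= L * `|x - y|) -> differentiable f x ->
  `|'d f x v| <= L * `|v|.
Proof.
move=> Hf df; rewrite -deriveE // /derive -lim_norm; last exact: diff_derivable.
apply: limr_le; first by apply: is_cvg_norm; exact: diff_derivable.
near=> h; rewrite /= normrZ.
have hn0 : h != 0 by near: h; exact: nbhs_dnbhs_neq.
rewrite normfV ler_pdivrMl ?normr_gt0 //.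
apply: le_trans (Hf _ _) _; rewrite addrK normrZ mulrCA.
Unshelve. all: by end_near. Qed.

Lemma mulmx_cont (W : 'M[R]_n) : continuous (mulmx W : 'cV[R]_n -> 'cV[R]_n).
Proof.
apply: bounded_linear_continuous; apply/bounded_funP => r.
exists ((\sum_i \sum_j `|W i j|) * r) => x xr.
have H := @mulmx_norm R n W x. apply: (le_trans H). rewrite ler_wpM2l //.
by apply: sumr_ge0 => *; apply: sumr_ge0 => *.
Qed.

End Analytic.

Theorem mainTheorem2 (R : realType) (n : nat) (p : pexp)
  (f : 'cV[R]_n -> 'cV[R]_n) (W : 'M[R]_n) :
  lipschitz_map f ->
  (forall x, differentiable f x) ->
  W \in unitmx ->
  (WIC p W f <->
   exists gamma : R, 0 <= gamma /\
     exists phi : 'cV[R]_n -> 'cV[R]_n,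
       (forall x, differentiable phi x) /\ lipschitz_map phi /\
       lip_norm_le p phi gamma /\
       (forall x, f x = - gamma *: x + invmx W *m phi (W *m x))).
Proof.
move=> [L HL] df Wu.
set Wi := invmx W.
have dW : forall (M : 'M[R]_n) y, differentiable (mulmx M : 'cV[R]_n -> 'cV[R]_n) y.
  by move=> M y; apply: linear_differentiable; exact: mulmx_cont.
have dWE : forall (M : 'M[R]_n) y, 'd (mulmx M : 'cV[R]_n -> 'cV[R]_n) y = mulmx M :> (_ -> _).
  by move=> M y; apply: diff_lin; exact: mulmx_cont.
have dS : forall (c : R) (y : 'cV[R]_n), differentiable ( *:%R c : 'cV[R]_n -> 'cV[R]_n) y.
  by move=> c y; case: (@is_diff_scaler R _ c y).
have dSE : forall (c : R) (y : 'cV[R]_n), 'd ( *:%R c : 'cV[R]_n -> 'cV[R]_n) y = *:%R c :> (_ -> _).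
  by move=> c y; case: (@is_diff_scaler R _ c y).
split.
- move=> Hwic.
  set cW := \sum_i \sum_j `|W i j|.
  set cWi := \sum_i \sum_j `|Wi i j|.
  have cW0 : 0 <= cW by apply: sumr_ge0 => *; apply: sumr_ge0 => *.
  have cWi0 : 0 <= cWi by apply: sumr_ge0 => *; apply: sumr_ge0 => *.
  set g := cW * `|L| * cWi.
  have g0 : 0 <= g by rewrite mulr_ge0 // mulr_ge0.
  have HL' : forall x y, `|f x - f y| <= `|L| * `|x - y|.
    by move=> x y; apply: le_trans (HL x y) _; rewrite ler_wpM2r // ler_norm.
  have diagb : forall x j, `|(W *m jac f x *m Wi) j j| <= g.
    move=> x j.
    have -> : (W *m jac f x *m Wi) j j = (W *m ('d f x (Wi *m delta_mx j 0))) j 0.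
      by rewrite jacE !mulmxA -colE [RHS]mxE.
    apply: le_trans (@mxnorm_entry R _ _ _ j 0) _.
    apply: le_trans (@mulmx_norm R n W _) _; rewrite /g -!mulrA ler_wpM2l //.
    apply: le_trans (@diff_lip R n f _ x _ HL' (df x)) _; rewrite ler_wpM2l //.
    apply: le_trans (@mulmx_norm R n Wi _) _; rewrite -[leRHS]mulr1 ler_wpM2l //.
    apply: mxnorm_le => // i k; rewrite /delta_mx mxE.
    by case: (_ && _); rewrite ?normr1 ?normr0.
  pose F1 := (mulmx W : 'cV[R]_n -> 'cV[R]_n) \o (f \o (mulmx Wi)).
  pose phi := F1 + ( *:%R g).
  have dF1 : forall y, differentiable F1 y.
    move=> y; apply: differentiable_comp; last exact: dW.
    by apply: differentiable_comp; [exact: dW | exact: df].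
  have dphi : forall y, differentiable phi y.
    by move=> y; apply: differentiableD; [exact: dF1 | exact: dS].
  have dphiE : forall y v, 'd phi y v = W *m ('d f (Wi *m y) (Wi *m v)) + g *: v.
    move=> y v; have E := diffD (dF1 y) (dS g y).
    apply: (etrans (congr1 (fun h => h v) E)).
    
    change ('d F1 y v + 'd ( *:%R g) y v = W *m 'd f (Wi *m y) (Wi *m v) + g *: v).
    
    have dFi : differentiable (f \o mulmx Wi) y by apply: differentiable_comp; [exact: dW | exact: df].
    
    have E2 := diff_comp dFi (dW W _).
    
    have E3 := diff_comp (dW Wi y) (df _).
    
    congr (_ + _); last exact: (congr1 (fun h => h v) (dSE g y)).
    
    apply: (etrans (congr1 (fun h => h v) E2)).
    change ('d (mulmx W) ((f \o mulmx Wi) y) ('d (f \o mulmx Wi) y v) = W *m 'd f (Wi *m y) (Wi *m v)).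
    apply: (etrans (congr1 (fun h => h ('d (f \o mulmx Wi) y v)) (dWE W _))).
    change (W *m ('d (f \o mulmx Wi) y v) = W *m 'd f (Wi *m y) (Wi *m v)).
    congr (W *m _).
    apply: (etrans (congr1 (fun h => h v) E3)).
    change ('d f (Wi *m y) ('d (mulmx Wi) y v) = 'd f (Wi *m y) (Wi *m v)).
    congr ('d f (Wi *m y) _).
    exact: (congr1 (fun h => h v) (dWE Wi y)).
  have jphi : forall y, jac phi y = W *m jac f (Wi *m y) *m Wi + g%:M.
    move=> y; apply: mx_ext => v.
    rewrite -(@jacE R n phi y v) (dphiE y v) (@jacE R n f (Wi *m y) (Wi *m v)).
    by rewrite mulmxDl mul_scalar_mx !mulmxA.
  
  exists g; split => //; exists phi; split => //; split; [|split].
  + exists (g + g) => a b.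
    have -> : phi a - phi b = W *m (f (Wi *m a) - f (Wi *m b)) + g *: (a - b).
      rewrite mulmxBr scalerBr.
      change (W *m f (Wi *m a) + g *: a - (W *m f (Wi *m b) + g *: b) = W *m f (Wi *m a) - W *m f (Wi *m b) + (g *: a - g *: b)).
      by rewrite opprD !addrA; congr (_ + _); rewrite -!addrA; congr (_ + _); rewrite addrC.
    
    apply: le_trans (ler_normD _ _) _; rewrite mulrDl lerD //.
      apply: le_trans (@mulmx_norm R n W _) _; rewrite /g -!mulrA ler_wpM2l //.
      apply: le_trans (HL' _ _) _; rewrite ler_wpM2l // -mulmxBr.
      exact: (@mulmx_norm R n Wi _).
    by rewrite normrZ ger0_norm.
  + 
    move=> y; rewrite jphi; apply: ind_norm_le => //.
    apply: colrow_shift => [j|j]; last exact: diagb.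
    exact: le_trans (@elt_le_mu R n p _ j) (Hwic (Wi *m y)).
  + 
    move=> x.
    change (f x = - g *: x + Wi *m (W *m f (Wi *m (W *m x)) + g *: (W *m x))).
    rewrite !mulmxA mulVmx // mul1mx mulmxDr !mulmxA mulVmx // mul1mx.
    by rewrite -scalemxAr mulmxA mulVmx // mul1mx scaleNr addrC addrK.
- move=> [g [g0 [phi [dphi [lphi [lnorm feq]]]]]] x.
  rewrite /wmu.
  set J := jac phi (W *m x).
  have fE : f = ( *:%R (- g) : 'cV[R]_n -> 'cV[R]_n) + ((mulmx Wi : 'cV[R]_n -> 'cV[R]_n) \o (phi \o mulmx W)).
    by apply/funext => y; rewrite feq.
  have dG : differentiable (phi \o mulmx W) x := differentiable_comp (dW W x) (dphi _).
  have dH : differentiable ((mulmx Wi : 'cV[R]_n -> 'cV[R]_n) \o (phi \o mulmx W)) x := differentiable_comp dG (dW Wi _).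
  have E := diffD (dS (-g) x) dH.
  have E2 := diff_comp dG (dW Wi _).
  have E3 := diff_comp (dW W x) (dphi _).
  
  have Jeq : jac f x = (- g)%:M + Wi *m J *m W.
    apply: mx_ext => v.
    rewrite mulmxDl. rewrite mul_scalar_mx. rewrite -!mulmxA. apply: (etrans (esym (@jacE R n f x v))).
    
    have -> : 'd f x v = 'd (( *:%R (- g) : 'cV[R]_n -> 'cV[R]_n) + ((mulmx Wi : 'cV[R]_n -> 'cV[R]_n) \o (phi \o mulmx W))) x v.
      by rewrite -fE.
    
    apply: (etrans (congr1 (fun h => h v) E)).
    change ('d ( *:%R (-g)) x v + 'd ((mulmx Wi : 'cV[R]_n -> 'cV[R]_n) \o (phi \o mulmx W)) x v = - g *: v + Wi *m (J *m (W *m v))).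
    congr (_ + _); first exact: (congr1 (fun h => h v) (dSE (-g) x)).
    
    apply: (etrans (congr1 (fun h => h v) E2)).
    change ('d (mulmx Wi) ((phi \o mulmx W) x) ('d (phi \o mulmx W) x v) = Wi *m (J *m (W *m v))).
    apply: (etrans (congr1 (fun h => h ('d (phi \o mulmx W) x v)) (dWE Wi _))).
    change (Wi *m ('d (phi \o mulmx W) x v) = Wi *m (J *m (W *m v))).
    congr (Wi *m _).
    apply: (etrans (congr1 (fun h => h v) E3)).
    change ('d phi (W *m x) ('d (mulmx W) x v) = J *m (W *m v)).
    apply: (etrans (congr1 ('d phi (W *m x)) (congr1 (fun h => h v) (dWE W x)))).
    exact: jacE.
  
  have -> : W *m jac f x *m Wi = (- g)%:M + J.
    rewrite Jeq mulmxDr mulmxDl mul_mx_scalar -scalemxAl mulmxV // scalemx1.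
    by rewrite !mulmxA mulmxV // mul1mx -mulmxA mulmxV // mulmx1.
  
  apply: mu_le0 => j; rewrite addrC elt_shift.
  by have := le_trans (@elt_le_ind R n p J j) (lnorm (W *m x)); lra.
Qed.
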